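(* Let $q$ be the semi-Markov kernel of a homogeneous $d$-dimensional multi-time Markov renewal chain, let $u=(\mathbbm{I}_s-q)^{(-1)}=\sum_{n\ge0}q^{(n)}$, and let $G\in\mathcal{M}_s(\mathbb{N}^d)$ be given. Then the multi-time Markov renewal equation $L=G+q*L$ in the unknown $L\in\mathcal{M}_s(\mathbb{N}^d)$ has a unique solution, given by $L=u*G$.
   Context: $E=\{1,\dots,s\}$; $\mathcal{M}_s(\mathbb{N}^d)$ is the set of functions $\mathbb{N}^d\to\mathbb{R}^{s\times s}$, with convolution $[A*B](k)=\sum_{l+l'=k}A(l)B(l')$, identity $\mathbbm{I}_s$ ($\mathbbm{I}_s(0_d)=I_s$, zero elsewhere), powers $A^{(0)}=\mathbbm{I}_s$, $A^{(n)}=A*A^{(n-1)}$, convolutional inverse $A^{(-1)}$. A homogeneous $d$-dimensional multi-time Markov renewal chain is a process $(J_n,S_n)_{n\in\mathbb{N}}$, $J_n\in E$, $S_n\in\mathbb{N}^d$, $S_0=0_d$, $S_n<S_{n+1}$ (componentwise $\le$, not equal), with a.s. $\mathbb{P}(J_{n+1}=j,S_{n+1}-S_n=k\mid J_{0:n},S_{0:n})=q_{J_nj}(k)$ where $q_{ij}(k)=\mathbb{P}(J_{n+1}=j,S_{n+1}-S_n=k\mid J_n=i)$ is independent of $n$ (so $q(0_d)=O_s$). *)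

(* Defs.v *)
From HB Require Import structures.
From mathcomp Require Import all_boot all_order all_algebra.
From mathcomp Require Import all_classical all_reals all_analysis.
Set Implicit Arguments. Unset Strict Implicit. Unset Printing Implicit Defensive.
Import Order.TTheory GRing.Theory Num.Theory.
Local Open Scope classical_set_scope.
Local Open Scope ring_scope.

Definition Nd (d : nat) := 'I_d -> nat.

Definition Mfun (R : realType) (s d : nat) := Nd d -> 'M[R]_s.

Section Defs.
Variables (R : realType) (s d : nat).

Definition zeroNd : Nd d := fun _ => 0%N.

Definition ndmax (k : Nd d) : nat := \max_(i < d) k i.

Definition leNd (l k : Nd d) : bool := [forall i, (l i <= k i)%N].

(* Convolution [A*B](k) = sum_{l + l' = k} A(l) B(l'), the sum being over the
   l <= k (componentwise), l' = k - l; the l range over the box [0, max k]^d. *)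
Definition mconv (A B : Mfun R s d) : Mfun R s d := fun k =>
  \sum_(l : {ffun 'I_d -> 'I_(ndmax k).+1} |
         leNd (fun i => nat_of_ord (l i)) k)
     A (fun i => nat_of_ord (l i)) *m B (fun i => (k i - l i)%N).

Definition convI : Mfun R s d := fun k => if [forall i, k i == 0%N] then 1%:M else 0.

Fixpoint conv_pow (A : Mfun R s d) (n : nat) : Mfun R s d :=
  match n with
  | 0 => convI
  | n'.+1 => mconv A (conv_pow A n')
  end.

Definition renewal_u (q : Mfun R s d) : Mfun R s d := fun k =>
  \matrix_(i, j) lim ((fun N => \sum_(n < N) conv_pow q n k i j) @ \oo).

(* Semi-Markov kernel of a homogeneous d-dimensional multi-time Markov renewal
   chain: q_ij(k) = P(J_{n+1}=j, S_{n+1}-S_n=k | J_n=i); so entries are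
   nonnegative, q(0_d) = O_s (since S_n < S_{n+1}), and for each i the total
   mass sum_j sum_k q_ij(k) equals 1 (partial sums over boxes [0,N]^d tend
   to 1). *)
Definition semi_markov_kernel (q : Mfun R s d) : Prop :=
  [/\ forall k i j, 0 <= q k i j,
      q zeroNd = 0 &
      forall i : 'I_s,
        (fun N : nat => (\sum_(j < s)
            \sum_(l : {ffun 'I_d -> 'I_N.+1}) q (fun x => nat_of_ord (l x)) i j : R))
        @ \oo --> (1%R : R^o)].

End Defs.

(* Main.v *)
Require Import Defs.
From HB Require Import structures.
From mathcomp Require Import all_boot all_order all_algebra.
From mathcomp Require Import all_classical all_reals all_analysis.
Import Order.TTheory GRing.Theory Num.Theory.
Local Open Scope classical_set_scope.
Local Open Scope ring_scope.

Set Implicit Arguments. Unset Strict Implicit.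
Section Aux.
Variables (R : realType) (s d : nat).
Local Notation MF := (Mfun R s d).
Local Notation bx M := {ffun 'I_d -> 'I_M.+1}.
Definition vl M (l : bx M) : Nd d := fun i => nat_of_ord (l i).
Arguments vl {M} l _.
Definition deg (k : Nd d) := (\sum_(i < d) k i)%N.
Definition inbox M (x : Nd d) := [forall i, (x i <= M)%N].
Definition addeq (l m k : Nd d) := [forall i, (l i + m i == k i)%N].

Lemma le_ndmax (k : Nd d) i : (k i <= ndmax k)%N.
Proof. exact: (leq_bigmax i). Qed.

Lemma bsum_indep (V : nmodType) N M (F : Nd d -> V) : (N <= M)%N ->
  (forall x, F x != 0 -> inbox N x) ->
  \sum_(l : bx M) F (vl l) = \sum_(l : bx N) F (vl l).
Proof.
move=> NM supp.
rewrite (bigID (fun l : bx M => inbox N (vl l))) /=.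
rewrite [X in _ + X]big1 ?addr0; last first.
  by move=> l Hl; apply/eqP; apply: contraNT Hl; exact: supp.
have NM1 : (N.+1 <= M.+1)%N by rewrite ltnS.
rewrite (reindex_onto (fun l : bx N => [ffun i => widen_ord NM1 (l i)] : bx M)
   (fun l : bx M => [ffun i => inord (l i)] : bx N)) /=; last first.
  move=> l /forallP Hl; apply/ffunP => i; rewrite !ffunE; apply: val_inj => /=.
  by rewrite inordK // ltnS; exact: Hl.
apply: eq_big => l.
  apply/andP; split.
    by apply/forallP => i; rewrite /vl ffunE /= -ltnS.
  apply/eqP/ffunP => i; rewrite !ffunE; apply: val_inj => /=.
  by rewrite inordK.
move=> _; congr F; apply: funext => i; by rewrite /vl ffunE.
Qed.


Lemma mconvE (A B : MF) k M : (ndmax k <= M)%N ->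
  mconv A B k = \sum_(l : bx M) \sum_(m : bx M)
     (if addeq (vl l) (vl m) k then A (vl l) *m B (vl m) else 0).
Proof.
move=> kM.
rewrite /mconv big_mkcond.
pose F := (fun x => if leNd x k then A x *m B (fun i => k i - x i)%N else 0).
transitivity (\sum_(l : bx (ndmax k)) F (vl l)); first by [].
rewrite -(@bsum_indep _ _ _ F kM); last first.
  move=> x; rewrite /F; case: ifP => [/forallP Hx _|]; last by rewrite eqxx.
  apply/forallP => i.
  exact: leq_trans (Hx i) (le_ndmax k i).
rewrite /F; apply: eq_bigr => l _.
case: ifP => Hl.
- set m0 : bx M := [ffun i => inord (k i - l i)].
  have vm0 : vl m0 = (fun i => k i - vl l i)%N.
    apply: funext => i; rewrite /vl ffunE inordK // ltnS.
    exact: leq_trans (leq_subr _ _) (leq_trans (le_ndmax k i) kM).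
  rewrite (bigD1 m0) //= [X in _ + X]big1 ?addr0.
  + have -> : addeq (vl l) (vl m0) k.
      apply/forallP => i; rewrite vm0 /vl subnKC //; move: Hl; rewrite /leNd => /forallP; apply.
    by rewrite vm0.
  + move=> m Hm; case: ifP => // /forallP Hadd; exfalso; move/eqP: Hm; apply.
    apply/ffunP => i; apply/val_inj; rewrite ffunE /= inordK.
      by rewrite -(eqP (Hadd i)) /vl addKn.
    rewrite ltnS; exact: leq_trans (leq_subr _ _) (leq_trans (le_ndmax k i) kM).
- rewrite big1 // => m _; case: ifP => // /forallP Hadd; exfalso; move: Hl.
  move/negbT/negP; apply; rewrite /leNd; apply/forallP => i; rewrite -(eqP (Hadd i)); exact: leq_addr.
Qed.

Lemma collapse (V : nmodType) M (x : Nd d) (P : Nd d -> bool) (X : V) :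
  \sum_(p : bx M) (if [forall i, vl p i == x i] && P (vl p) then X else 0)
  = if inbox M x && P x then X else 0.
Proof.
case: (boolP (inbox M x)) => /= Hx.
- set p0 : bx M := [ffun i => inord (x i)].
  have vp0 : vl p0 = x.
    apply: funext => i; rewrite /vl ffunE inordK // ltnS; by move/forallP: Hx.
  rewrite (bigD1 p0) //= big1 ?addr0.
    have -> : [forall i, vl p0 i == x i] by apply/forallP => i; rewrite vp0.
    by rewrite vp0.
  move=> p Hp; case: ifP => // /andP [/forallP Hpx _]; exfalso; move/eqP: Hp; apply.
  apply/ffunP => i; apply/val_inj; rewrite ffunE /= -(eqP (Hpx i)) /vl inordK //.
- rewrite big1 // => p _; case: ifP => // /andP [/forallP Hpx _]; exfalso.
  move/negP: Hx; apply; apply/forallP => i; rewrite -(eqP (Hpx i)) /vl -ltnS.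
  exact: ltn_ord.
Qed.


Lemma collapse2 (V : nmodType) M (x y : Nd d) (P : Nd d -> bool) (X : V) :
  \sum_(p : bx M) (if addeq x y (vl p) && P (vl p) then X else 0)
  = if inbox M (fun i => x i + y i)%N && P (fun i => x i + y i)%N then X else 0.
Proof.
rewrite -(collapse M (fun i => x i + y i)%N P X); apply: eq_bigr => p _.
congr (if _ then _ else _); congr (_ && _); apply: eq_forallb => i.
by rewrite eq_sym.
Qed.

Lemma addeq_box M (x y k : Nd d) : (ndmax k <= M)%N -> addeq x y k -> inbox M x.
Proof.
move=> kM /forallP H; apply/forallP => i; apply: leq_trans (leq_addr (y i) _) _.
rewrite (eqP (H i)); exact: leq_trans (le_ndmax k i) kM.
Qed.

Lemma addeq_ndmax (x y k : Nd d) : addeq x y k -> (ndmax x <= ndmax k)%N.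
Proof.
move=> /forallP H; apply/bigmax_leqP => i _.
apply: leq_trans (le_ndmax k i); rewrite -(eqP (H i)); exact: leq_addr.
Qed.

Lemma mconvA (A B C : MF) k : mconv (mconv A B) C k = mconv A (mconv B C) k.
Proof.
set M := ndmax k.
have kM := leqnn M.
transitivity (\sum_(l : bx M) \sum_(m : bx M) \sum_(n : bx M)
  (if addeq (fun i => vl l i + vl m i)%N (vl n) k
   then A (vl l) *m B (vl m) *m C (vl n) else 0)).
  rewrite (mconvE _ _ kM).
  have E1 : forall p n : bx M,
    (if addeq (vl p) (vl n) k then mconv A B (vl p) *m C (vl n) else 0) =
    \sum_(l : bx M) \sum_(m : bx M) (if addeq (vl l) (vl m) (vl p) && addeq (vl p) (vl n) k
      then A (vl l) *m B (vl m) *m C (vl n) else 0).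
    move=> p n; case: ifP => H.
    - rewrite (mconvE _ _ (leq_trans (addeq_ndmax H) kM)) mulmx_suml.
      apply: eq_bigr => l _; rewrite mulmx_suml; apply: eq_bigr => m _.
      by rewrite andbT; case: ifP => _ //; rewrite mul0mx.
    - by rewrite big1 // => l _; rewrite big1 // => m _; rewrite andbF.
  under eq_bigr => p _ do under eq_bigr => n _ do rewrite E1.
  rewrite exchange_big.
  under eq_bigr => n _ do rewrite exchange_big.
  under eq_bigr => n _ do under eq_bigr => l _ do rewrite exchange_big.
  rewrite exchange_big.
  under eq_bigr => l _ do rewrite exchange_big.
  apply: eq_bigr => l _; apply: eq_bigr => m _; apply: eq_bigr => n _.
  rewrite (collapse2 _ _ _ (fun y => addeq y (vl n) k)); congr (if _ then _ else _).
  by case: (boolP (addeq _ _ _)) => H; rewrite ?andbF // andbT (addeq_box kM H).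
rewrite [RHS](mconvE _ _ kM).
have E2 : forall l q : bx M,
  (if addeq (vl l) (vl q) k then A (vl l) *m mconv B C (vl q) else 0) =
  \sum_(m : bx M) \sum_(n : bx M) (if addeq (vl m) (vl n) (vl q) && addeq (vl l) (vl q) k
      then A (vl l) *m B (vl m) *m C (vl n) else 0).
  move=> l q; case: ifP => H.
  - have Hq : addeq (vl q) (vl l) k.
      by move/forallP: H => H; apply/forallP => i; rewrite addnC H.
    rewrite (mconvE _ _ (leq_trans (addeq_ndmax Hq) kM)) mulmx_sumr.
    apply: eq_bigr => m _; rewrite mulmx_sumr; apply: eq_bigr => n _.
    by rewrite andbT; case: ifP => _; rewrite ?mulmx0 // mulmxA.
  - by rewrite big1 // => m _; rewrite big1 // => n _; rewrite andbF.
under [RHS]eq_bigr => l _ do under eq_bigr => q _ do rewrite E2.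
under [RHS]eq_bigr => l _ do rewrite exchange_big.
under [RHS]eq_bigr => l _ do under eq_bigr => m _ do rewrite exchange_big.
apply: eq_bigr => l _; apply: eq_bigr => m _; apply: eq_bigr => n _.
rewrite (collapse2 _ _ _ (fun y => addeq (vl l) y k)).
have -> : addeq (vl l) (fun i => vl m i + vl n i)%N k =
          addeq (fun i => vl l i + vl m i)%N (vl n) k.
  by apply: eq_forallb => i; rewrite addnA.
case: (boolP (addeq _ _ _)) => H; rewrite ?andbF // andbT.
have H' : addeq (fun i => vl m i + vl n i)%N (vl l) k.
  by move/forallP: H => H; apply/forallP => i; rewrite addnC addnA H.
by rewrite (addeq_box kM H').
Qed.


Lemma mconv1l (G : MF) k : mconv (@convI R s d) G k = G k.
Proof.
rewrite /mconv (bigD1 [ffun _ => ord0]) /=; last first.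
  by rewrite /leNd; apply/forallP => i; rewrite ffunE.
rewrite [X in _ + X]big1 ?addr0.
  rewrite /convI.
  have -> : [forall i : 'I_d, nat_of_ord (([ffun _ => ord0] : bx (ndmax k)) i) == 0%N].
    by apply/forallP => i; rewrite ffunE.
  rewrite mul1mx; congr G; apply: funext => i; by rewrite ffunE subn0.
move=> l /andP [_ Hl]; rewrite /convI; case: ifP; last by rewrite mul0mx.
move=> /forallP H; exfalso; move/eqP: Hl; apply; apply/ffunP => i.
apply: val_inj; rewrite ffunE /=; exact: (eqP (H i)).
Qed.

Lemma mconvDl (A B C : MF) k :
  mconv (fun x => A x + B x) C k = mconv A C k + mconv B C k.
Proof. by rewrite /mconv -big_split; apply: eq_bigr => l _; rewrite mulmxDl. Qed.

Lemma mconvBr (A B C : MF) k :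
  mconv A (fun x => B x - C x) k = mconv A B k - mconv A C k.
Proof. by rewrite /mconv -sumrB; apply: eq_bigr => l _; rewrite mulmxBr. Qed.

Lemma mconv_sumr (A : MF) (F : nat -> MF) N k :
  mconv A (fun x => \sum_(n < N) F n x) k = \sum_(n < N) mconv A (F n) k.
Proof.
rewrite /mconv exchange_big; apply: eq_bigr => l _; by rewrite mulmx_sumr.
Qed.

Lemma leNd_sub (k l : Nd d) : leNd (fun i => k i - l i)%N k.
Proof. by apply/forallP => i; rewrite leq_subr. Qed.

Lemma mconv_ext (A A' B B' : MF) k :
  (forall l, leNd l k -> A l = A' l) -> (forall l, leNd l k -> B l = B' l) ->
  mconv A B k = mconv A' B' k.
Proof.
move=> HA HB; rewrite /mconv; apply: eq_bigr => l Hl.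
by rewrite HA // HB // leNd_sub.
Qed.

Lemma leNd_trans (x y z : Nd d) : leNd x y -> leNd y z -> leNd x z.
Proof.
move=> /forallP H1 /forallP H2; apply/forallP => i; exact: leq_trans (H1 i) (H2 i).
Qed.

Lemma deg_le (x y : Nd d) : leNd x y -> (deg x <= deg y)%N.
Proof. move=> /forallP H; apply: leq_sum => i _; exact: H. Qed.

Lemma deg_sub (k l : Nd d) : leNd l k -> ~~ [forall i, l i == 0%N] ->
  (deg (fun i => k i - l i)%N < deg k)%N.
Proof.
move=> /forallP Hl /forallP Hn.
have E : (deg (fun i => k i - l i)%N + deg l = deg k)%N.
  by rewrite /deg -big_split; apply: eq_bigr => i _; rewrite /= subnK //; exact: Hl.
have : (0 < deg l)%N.
  have [i Hi] : exists i, l i != 0%N.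
    by apply/existsP; rewrite -negb_forall; apply/negP => /forallP.
  rewrite /deg (bigD1 i) //; rewrite -lt0n in Hi; exact: leq_trans Hi (leq_addr _ _).
move=> H; rewrite -E -{1}(addn0 (deg _)) ltn_add2l; exact: H.
Qed.

Lemma mconv_q0 (q X : MF) k : q (@zeroNd d) = 0 ->
  (forall m, (deg m < deg k)%N -> X m = 0) -> mconv q X k = 0.
Proof.
move=> q0 HX; rewrite /mconv big1 // => l Hl.
case: (boolP [forall i, (nat_of_ord (l i)) == 0%N]) => H0.
  have -> : (fun i => nat_of_ord (l i)) = @zeroNd d.
    by apply: funext => i; apply/eqP; move/forallP: H0.
  by rewrite q0 mul0mx.
by rewrite HX ?mulmx0 //; exact: deg_sub.
Qed.


Lemma pow_vanish (q : MF) n k : q (@zeroNd d) = 0 -> (deg k < n)%N ->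
  conv_pow q n k = 0.
Proof.
move=> q0; elim: n k => [//|n IH] k Hk /=.
apply: mconv_q0 => // m Hm; apply: IH; exact: leq_trans Hm Hk.
Qed.

Definition Ufin (q : MF) K : MF := fun l => \sum_(n < K) conv_pow q n l.

Lemma u_val (q : MF) k K : q (@zeroNd d) = 0 -> (deg k < K)%N ->
  renewal_u q k = Ufin q K k.
Proof.
move=> q0 HK; apply/matrixP => i j; rewrite /renewal_u mxE /Ufin summxE.
apply: (lim_near_cst (@norm_hausdorff _ _)); exists K => // N HN; have HN' : (K <= N)%N := HN.
rewrite (big_ord_widen N (fun n => conv_pow q n k i j) HN') [RHS]big_mkcond.
apply: eq_bigr => n _; case: ifP => // /negbT; rewrite -leqNgt => Hn.
by rewrite pow_vanish ?mxE // (leq_trans HK Hn).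
Qed.

Lemma Ufin_rec (q : MF) K l : Ufin q K.+1 l = convI R s l + mconv q (Ufin q K) l.
Proof.
rewrite /Ufin big_ord_recl mconv_sumr; congr (_ + _).
Qed.

Lemma sol_exists (q G : MF) k : q (@zeroNd d) = 0 ->
  mconv (renewal_u q) G k = G k + mconv q (mconv (renewal_u q) G) k.
Proof.
move=> q0; set K := (deg k).+1.
have HK : forall l, leNd l k -> forall K', (K <= K')%N -> renewal_u q l = Ufin q K' l.
  move=> l Hl K' HK'; apply: u_val => //.
  exact: leq_ltn_trans (deg_le Hl) (leq_trans (ltnSn _) HK').
rewrite (@mconv_ext _ (Ufin q K.+1) G G k); first last.
- by [].
- move=> l Hl; apply: HK => //.
have -> : Ufin q K.+1 = fun l => convI R s l + mconv q (Ufin q K) l.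
  by apply: funext => l; rewrite Ufin_rec.
rewrite mconvDl mconv1l mconvA; congr (_ + _).
apply: mconv_ext => // l Hl; apply: mconv_ext => // m Hm.
symmetry; apply: HK => //; exact: leNd_trans Hm Hl.
Qed.

Lemma sol_uniq (q X : MF) : q (@zeroNd d) = 0 ->
  (forall k, X k = mconv q X k) -> forall k, X k = 0.
Proof.
move=> q0 HX.
suff H : forall n k, (deg k < n)%N -> X k = 0 by move=> k; exact: (H (deg k).+1).
elim=> [//|n IH] k Hk; rewrite HX; apply: mconv_q0 => // m Hm.
apply: IH; exact: leq_trans Hm Hk.
Qed.

End Aux.

Theorem corollary3 (R : realType) (s d : nat) (q G : Mfun R s d) :
  semi_markov_kernel q ->
  forall L : Mfun R s d,
    (L = fun k => G k + mconv q L k) <-> L = mconv (renewal_u q) G.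
Proof.
case=> _ q0 _ L; split; last first.
  by move=> ->; apply: funext => k; exact: sol_exists.
move=> HL; apply: funext => k; apply/eqP; rewrite -subr_eq0; apply/eqP.
pose X := fun x => L x - mconv (renewal_u q) G x.
apply: (@sol_uniq R s d q X q0) => x.
rewrite /X mconvBr [mconv (renewal_u q) G x]sol_exists //.
have -> : L x = G x + mconv q L x by rewrite {1}HL.
by rewrite opprD addrACA subrr add0r.
Qed.
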